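(* Let $A$ be a $J^*$-algebra and let $r>1$. Let $T : A \to A$ be a mapping satisfying $T(rx)=rT(x)$ for all $x\in A$, and suppose there exists a function $\varphi: A\times A\times A\to [0, \infty)$ such that $$\lim_{n\to\infty} r^{-n}\varphi(r^n x, r^n y, r^n z)=0 \quad\text{for all } x,y,z\in A,$$ and $$\|T(\lambda x+y+zz^*z)-\lambda T(x)-T(y)-T(z)T(z)^*T(z)\|\leq\varphi(x, y, z)$$ for all $\lambda \in \mathbb{C}$ and all $x, y, z\in A$. Then $T$ is a $J^*$-homomorphism.
   Context: A $J^*$-algebra is a norm-closed complex linear subspace $A$ of a $C^*$-algebra such that $xx^*x\in A$ whenever $x\in A$ (with the norm, involution and product inherited from the ambient $C^*$-algebra). For $J^*$-algebras $A$ and $B$, a $J^*$-homomorphism is a $\mathbb{C}$-linear mapping $T : A \to B$ such that $T(xx^*x)=T(x)T(x)^*T(x)$ for all $x\in A$. *)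

(* Defs.v *)
From HB Require Import structures.
From mathcomp Require Import all_boot all_order all_algebra.
From mathcomp Require Import all_classical all_reals all_analysis.
From mathcomp Require Import complex.
Set Implicit Arguments. Unset Strict Implicit. Unset Printing Implicit Defensive.
Import Order.TTheory GRing.Theory Num.Theory.
Import numFieldNormedType.Exports.
Local Open Scope ring_scope.
Local Open Scope complex_scope.

Definition is_Cstar_algebra (R : realType) (V : completeNormedModType R[i])
    (mul : V -> V -> V) (star : V -> V) : Prop :=
  (forall x y z, mul x (mul y z) = mul (mul x y) z) /\
  (forall (a : R[i]) x y z, mul (a *: x + y) z = a *: mul x z + mul y z) /\
  (forall (a : R[i]) x y z, mul z (a *: x + y) = a *: mul z x + mul z y) /\
  (forall (a : R[i]) x y, star (a *: x + y) = (a^*)%C *: star x + star y) /\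
  (forall x, star (star x) = x) /\
  (forall x y, star (mul x y) = mul (star y) (star x)) /\
  (forall x y, `|mul x y| <= `|x| * `|y|) /\
  (forall x, `|mul (star x) x| = `|x| ^+ 2).

Definition is_Jstar_algebra (R : realType) (V : completeNormedModType R[i])
    (mul : V -> V -> V) (star : V -> V) (A : set V) : Prop :=
  [/\ A 0,
      (forall (a : R[i]) x y, A x -> A y -> A (a *: x + y)),
      closed A
    & (forall x, A x -> A (mul (mul x (star x)) x))].

(* T : A -> A (represented as a function on V mapping A into A, whose values
   outside A are irrelevant) is a J*-homomorphism: C-linear on A and
   preserving the triple product x x^* x. *)
Definition is_Jstar_hom (R : realType) (V : completeNormedModType R[i])
    (mul : V -> V -> V) (star : V -> V) (A : set V) (T : V -> V) : Prop :=
  [/\ (forall x y, A x -> A y -> T (x + y) = T x + T y),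
      (forall (a : R[i]) x, A x -> T (a *: x) = a *: T x)
    & (forall x, A x -> T (mul (mul x (star x)) x) = mul (mul (T x) (star (T x))) (T x))].

(* Main.v *)
Require Import Defs.
From HB Require Import structures.
From mathcomp Require Import all_boot all_order all_algebra.
From mathcomp Require Import all_classical all_reals all_analysis.
From mathcomp Require Import complex.
Import Order.TTheory GRing.Theory Num.Theory.
Import numFieldNormedType.Exports.
Local Open Scope ring_scope.
Local Open Scope complex_scope.
Local Open Scope classical_set_scope.

Lemma lim_zero (R : realType) (u : nat -> R) (a : R[i]) :
  u @ \oo --> (0 : R) -> 0 <= a -> (forall n, a <= (u n)%:C) -> a = 0.
Proof.
move=> cu a0 au.
have [Im0 Re0] : complex.Im a = 0 /\ 0 <= complex.Re a.
  by move: a0; rewrite lecE /= => /andP[/eqP h1 h2].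
have Rle : forall n, complex.Re a <= u n.
  by move=> n; move: (au n); rewrite lecE /= => /andP[_ ->].
have : complex.Re a <= 0.
  rewrite leNgt; apply/negP => ha.
  move/cvgrPdist_lt: cu => /(_ _ ha) [N _ HN].
  have := HN N (leqnn N); rewrite /= sub0r normrN.
  move=> h; have := Rle N; move: h.
  by move=> h1 h2; move: (le_lt_trans (le_trans h2 (ler_norm _)) h1); rewrite ltxx.
move=> hle; have Re00 : complex.Re a = 0 by apply/le_anti; rewrite hle Re0.
by apply/eqP; rewrite eq_complex /= Re00 Im0 !eqxx.
Qed.

Lemma lec_real (R : realType) (x y : R) : (x%:C <= y%:C :> R[i]) = (x <= y).
Proof. by rewrite lecE /= eqxx. Qed.

Lemma realCM (R : realType) (a b : R) : (a * b)%:C = a%:C * b%:C :> R[i].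
Proof. by rewrite rmorphM. Qed.

Lemma scale_bound (R : realType) (b p : R) (c : R[i]) :
  0 < b -> b%:C * c <= p%:C -> c <= (b^-1 * p)%:C.
Proof.
move=> b0 h.
have bC : b%:C != 0 :> R[i] by rewrite (inj_eq (@complexI _)) gt_eqF.
have -> : c = (b^-1)%:C * (b%:C * c).
  by rewrite mulrA -rmorphM mulVf ?gt_eqF // mul1r.
rewrite rmorphM; apply: ler_wpM2l => //.
by rewrite lec_real invr_ge0 ltW.
Qed.

Lemma bound_zero (R : realType) (V : normedModType R[i]) (D : V) (r : R)
  (p : nat -> R) : 1 < r ->
  (fun n : nat => r ^- n * p n) @ \oo --> (0 : R) ->
  (forall n, (r ^+ n)%:C * `|D| <= (p n)%:C) -> D = 0.
Proof.
move=> r1 cu h; apply/normr0_eq0.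
apply: (@lim_zero R (fun n => r ^- n * p n)) => // n.
apply: scale_bound (h n).
by apply: exprn_gt0; apply: lt_trans r1.
Qed.

Theorem proposition2p1 (R : realType) (V : completeNormedModType R[i])
    (mul : V -> V -> V) (star : V -> V) (A : set V)
    (T : V -> V) (r : R) (phi : V -> V -> V -> R) :
  is_Cstar_algebra mul star ->
  is_Jstar_algebra mul star A ->
  (forall x, A x -> A (T x)) ->
  1 < r ->
  (forall x, A x -> T (r%:C *: x) = r%:C *: T x) ->
  (forall x y z, A x -> A y -> A z -> 0 <= phi x y z) ->
  (forall x y z, A x -> A y -> A z ->
     (fun n : nat => r ^- n * phi ((r ^+ n)%:C *: x) ((r ^+ n)%:C *: y)
                                  ((r ^+ n)%:C *: z)) @ \oo --> (0 : R)) ->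
  (forall (lam : R[i]) x y z, A x -> A y -> A z ->
     `|T (lam *: x + y + mul (mul z (star z)) z) - lam *: T x - T y
        - mul (mul (T z) (star (T z))) (T z)| <= (phi x y z)%:C) ->
  is_Jstar_hom mul star A T.
Proof.
move=> [_ [mlin [mlinr [slin [_ [_ _]]]]]] [A0 Alin _ Atr] AT r1 Tr phi0 phicvg ineq.
have AZ : forall (a : R[i]) x, A x -> A (a *: x).
  by move=> a x Ax; rewrite -[a *: x]addr0; apply: Alin.
have AD : forall x y, A x -> A y -> A (x + y).
  by move=> x y Ax Ay; rewrite -[x]scale1r; apply: Alin.
have mul0l : forall z, mul 0 z = 0.
  move=> z; have h := mlin 1 0 0 z; rewrite !scale1r addr0 in h.
  by apply: (addrI (mul 0 z)); rewrite addr0 -h.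
have mul0r : forall z, mul z 0 = 0.
  move=> z; have h := mlinr 1 0 0 z; rewrite !scale1r addr0 in h.
  by apply: (addrI (mul z 0)); rewrite addr0 -h.
have star0 : star 0 = 0.
  have h := slin 1 0 0; rewrite !scale1r addr0 conjc1 scale1r in h.
  by apply: (addrI (star 0)); rewrite addr0 -h.
have mulZl : forall a x z, mul (a *: x) z = a *: mul x z.
  by move=> a x z; have := mlin a x 0 z; rewrite !addr0 mul0l addr0.
have mulZr : forall a x z, mul z (a *: x) = a *: mul z x.
  by move=> a x z; have := mlinr a x 0 z; rewrite !addr0 mul0r addr0.
have starZ : forall a x, star (a *: x) = (a^*)%C *: star x.
  by move=> a x; have := slin a x 0; rewrite !addr0 star0 addr0.
have T0 : T 0 = 0.
  have h := Tr 0 A0; rewrite scaler0 in h.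
  have : (r%:C - 1) *: T 0 = 0 by rewrite scalerBl scale1r -h subrr.
  move/eqP; rewrite scaler_eq0 => /orP[|/eqP //].
  by rewrite subr_eq0 -[1]/(1%:C) (inj_eq (@complexI _)) gt_eqF.
have Tn : forall n x, A x -> T ((r ^+ n)%:C *: x) = (r ^+ n)%:C *: T x.
  elim=> [|n IH] x Ax; first by rewrite expr0 scale1r scale1r.
  rewrite exprS realCM -scalerA Tr; last exact: AZ.
  by rewrite IH // scalerA.
have rpos : forall n, 0 <= (r ^+ n)%:C :> R[i].
  by move=> n; rewrite lec_real exprn_ge0 // ltW // (lt_trans ltr01).
have nrm : forall n (v : V), `|(r ^+ n)%:C *: v| = (r ^+ n)%:C * `|v|.
  by move=> n v; rewrite normrZ ger0_norm.
have lin : forall (lam : R[i]) x y, A x -> A y ->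
    T (lam *: x + y) = lam *: T x + T y.
  move=> lam x y Ax Ay; apply/eqP; rewrite -subr_eq0 opprD addrA; apply/eqP.
  apply: (@bound_zero R V _ r (fun n => phi ((r ^+ n)%:C *: x) ((r ^+ n)%:C *: y)
     ((r ^+ n)%:C *: 0)) r1 (phicvg x y 0 Ax Ay A0)) => n.
  have h := ineq lam _ _ _ (AZ (r ^+ n)%:C x Ax) (AZ (r ^+ n)%:C y Ay)
              (AZ (r ^+ n)%:C 0 A0).
  rewrite scaler0 star0 !mul0l T0 star0 !mul0l !subr0 addr0 in h.
  rewrite -nrm scaler0; apply: le_trans h; rewrite le_eqVlt; apply/orP; left; apply/eqP.
  congr (`| _ |).
  rewrite scalerA mulrC -scalerA -scalerDr Tn; last by apply: Alin.
  by rewrite !Tn // !scalerBr scalerA mulrC -scalerA.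
split.
- by move=> x y Ax Ay; have := lin 1 x y Ax Ay; rewrite !scale1r.
- by move=> a x Ax; have := lin a x 0 Ax A0; rewrite !addr0 T0 addr0.
- move=> z Az.
  set q := fun w => mul (mul w (star w)) w.
  have qZ : forall n w, q ((r ^+ n)%:C *: w)
      = (r ^+ n)%:C *: ((r ^+ n)%:C *: ((r ^+ n)%:C *: q w)).
    by move=> n w; rewrite /q starZ conjc_real !mulZl !mulZr mulZl.
  apply/eqP; rewrite -subr_eq0; apply/eqP.
  apply: (@bound_zero R V _ r (fun n => phi ((r ^+ n)%:C *: 0) ((r ^+ n)%:C *: 0)
     ((r ^+ n)%:C *: z)) r1 (phicvg 0 0 z A0 A0 Az)) => n.
  pose s := (r ^+ n)%:C.
  have h : `|T (q (s *: z)) - q (T (s *: z))| <= (phi 0 0 (s *: z))%:C.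
    have := ineq 0 _ _ _ A0 A0 (AZ s z Az).
    by rewrite !scale0r T0 !add0r !subr0.
  have Aq : A (q z) by apply: Atr.
  rewrite /s in h. rewrite (Tn n z Az) (qZ n z) (qZ n (T z)) in h.
  have Aq1 : A ((r ^+ n)%:C *: q z) by exact: AZ.
  have Aq2 : A ((r ^+ n)%:C *: ((r ^+ n)%:C *: q z)) by exact: AZ.
  rewrite (Tn n _ Aq2) (Tn n _ Aq1) in h.
  rewrite Tn // -!scalerBr !nrm in h.
  rewrite !scaler0; apply: le_trans h.
  have E0 : 0 <= `|T (q z) - q (T z)| by [].
  apply: ler_wpM2l; first exact: rpos.
  rewrite mulrA; apply: ler_peMl => //.
  have s1 : 1 <= s by rewrite /s lec_real exprn_ege1 // ltW.
  by apply: mulr_ege1.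
Qed.
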